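(* Let $b\in B$, $i\in I$, $m=\varphi_i(b)$, $\xi\in P$, $j\ge0$, $n\ge0$ and $0\le t\le s\le m$. Suppose $p\in\mathcal P_j(\tilde f_i^sb,\xi)$ and $\tilde e_i^{\,n}p\in\mathcal P_j(\tilde f_i^tb,\xi+(n+t-s)\alpha_i)$. Then $$E(\tilde e_i^{\,n}p)=E(p)+\bigl((j+1)(s-t)-n\bigr)\delta_{0i}.$$
   Context: $\mathfrak g$ is an affine Kac–Moody algebra with index set $I$ ($0$ the special node), Cartan matrix $(a_{ij})$, simple coroots $h_i$, fundamental weights $\Lambda_i$, null root $\delta$. $P=\bigoplus_{i\in I}\mathbb Z\Lambda_i\oplus\mathbb Z\delta$, $P_{cl}=\bigoplus_{i\in I}\mathbb Z\Lambda_i$, $cl:P\to P_{cl}$ the projection killing $\delta$; $\alpha_i=\sum_ja_{ji}\Lambda_j+\delta_{i0}\delta$. $B$ is a finite crystal with $wt:B\to P_{cl}$, Kashiwara operators $\tilde e_i,\tilde f_i$, $\varepsilon_i(b)=\max\{k:\tilde e_i^kb\ne0\}$, $\varphi_i(b)=\max\{k:\tilde f_i^kb\ne0\}$. Tensor products: $wt$ is additive; $\tilde e_i(b_1\otimes b_2)=\tilde e_ib_1\otimes b_2$ if $\varphi_i(b_1)\ge\varepsilon_i(b_2)$ and $=b_1\otimes\tilde e_ib_2$ otherwise; $\tilde f_i(b_1\otimes b_2)=\tilde f_ib_1\otimes b_2$ if $\varphi_i(b_1)>\varepsilon_i(b_2)$ and $=b_1\otimes\tilde f_ib_2$ otherwise.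 An energy function is $H:B\otimes B\to\mathbb Z$ such that whenever $\tilde e_i(b\otimes b')\neq0$: $H(\tilde e_i(b\otimes b'))=H(b\otimes b')$ if $i\ne0$; $=H(b\otimes b')+1$ if $i=0$ and $\varphi_0(b)\ge\varepsilon_0(b')$; $=H(b\otimes b')-1$ if $i=0$ and $\varphi_0(b)<\varepsilon_0(b')$. For $j\ge0$, $b\in B$, $\mu\in P$: $\mathcal P_j(b,\mu)=\{b\otimes b_j\otimes\cdots\otimes b_1\in B^{\otimes(j+1)}:wt(b_j)+\cdots+wt(b_1)=cl(\mu)\}$ and $E(b_{j+1}\otimes\cdots\otimes b_1)=\sum_{i=1}^j iH(b_{i+1}\otimes b_i)$. *)

(* Defs.v *)
From HB Require Import structures.
From mathcomp Require Import all_boot all_order all_algebra.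
Set Implicit Arguments. Unset Strict Implicit. Unset Printing Implicit Defensive.
Import Order.TTheory GRing.Theory Num.Theory.
Local Open Scope ring_scope.

(* Affine generalized Cartan matrices (Kac, Thm 4.3 characterization:  *)
(* an indecomposable GCM is of affine type iff there is a vector with   *)
(* positive entries in its kernel).                                     *)
Definition is_GCM (I : finType) (a : I -> I -> int) : Prop :=
  (forall i, a i i = 2) /\
  (forall i j, i != j -> a i j <= 0) /\
  (forall i j, a i j = 0 <-> a j i = 0).

Definition indecomposable (I : finType) (a : I -> I -> int) : Prop :=
  forall J : {set I}, J != set0 -> J != setT ->
    exists i j, [/\ i \in J, j \notin J & a i j != 0].

Definition affine_cartan (I : finType) (a : I -> I -> int) : Prop :=
  [/\ is_GCM a, indecomposable a &
      exists d : I -> int, (forall i, 0 < d i) /\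
        (forall i, \sum_(k : I) a i k * d k = 0)].

(* Weight lattices: P_cl = (+)_i Z Lambda_i, P = P_cl (+) Z delta.      *)
Notation Pcl I := {ffun I -> int}.
Notation Pw I := (Pcl I * int)%type.   (* (classical part, delta-coeff) *)
Definition cl (I : finType) (mu : Pw I) : Pcl I := mu.1.
(* alpha_i = sum_j a_{ji} Lambda_j + delta_{i0} delta *)
Definition alpha (I : finType) (a : I -> I -> int) (i0 i : I) : Pw I :=
  ([ffun j => a j i], (i == i0)%:Z).

Definition iterp (T : Type) (g : T -> option T) (k : nat) (x : T) : option T :=
  iter k (obind g) (Some x).

(* Used with N = cardinality of the
   (finite) set in which the g-string of x lives; under the crystal
   axioms strings have no cycles, so this is exactly max{k : g^k x <> 0}. *)
Definition maxit (T : Type) (N : nat) (g : T -> option T) (x : T) : nat :=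
  (\max_(k < N.+1 | isSome (iterp g k x)) k)%N.

Record finCrystal (I : finType) (a : I -> I -> int) := FinCrystal {
  cB :> finType;
  cwt : cB -> Pcl I;
  ce : I -> cB -> option cB;
  cf : I -> cB -> option cB;
  c_ef : forall i b b', cf i b = Some b' <-> ce i b' = Some b;
  c_wte : forall i b b', ce i b = Some b' -> cwt b' = cwt b + [ffun j => a j i];
  c_wtf : forall i b b', cf i b = Some b' -> cwt b' = cwt b - [ffun j => a j i];
  (* phi_i(b) = eps_i(b) + <h_i, wt b>,  <h_i, Lambda_j> = delta_ij *)
  c_epsphi : forall i b,
    (maxit #|cB| (cf i) b)%:Z = (maxit #|cB| (ce i) b)%:Z + cwt b i
}.

Section Crys.
Variables (I : finType) (a : I -> I -> int) (B : finCrystal a).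

Definition eps (i : I) (b : B) : nat := maxit #|B| (ce i) b.
Definition phi (i : I) (b : B) : nat := maxit #|B| (cf i) b.

(* Tensor powers.  An element b_{n} (x) ... (x) b_1 of B^{(x) n} is the *)
(* sequence [:: b_n; ...; b_1] (left-to-right).  B^{(x) (n+1)} is      *)
(* B (x) B^{(x) n}; B^{(x) 0} is the trivial one-element crystal [::]. *)
Definition tens_step (i : I) (N : nat) (e2 f2 : seq B -> option (seq B)) :
    (seq B -> option (seq B)) * (seq B -> option (seq B)) :=
  let eps2 := maxit N e2 in
  let phi2 := maxit N f2 in
  (fun s => match s with
            | [::] => None
            | b :: r => if (eps2 r <= phi i b)%N
                        then omap (fun b' => b' :: r) (ce i b)
                        else omap (fun r' => b :: r') (e2 r)
            end,
   fun s => match s with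
            | [::] => None
            | b :: r => if (eps2 r < phi i b)%N
                        then omap (fun b' => b' :: r) (cf i b)
                        else omap (fun r' => b :: r') (f2 r)
            end).

Fixpoint tensEF (i : I) (n : nat) :
    (seq B -> option (seq B)) * (seq B -> option (seq B)) :=
  match n with
  | 0 => (fun _ => None, fun _ => None)
  | n'.+1 => let ef := tensEF i n' in tens_step i (#|B| ^ n') ef.1 ef.2
  end.

Definition tensE (i : I) (n : nat) : seq B -> option (seq B) := (tensEF i n).1.

Definition tens2_e (i : I) (bb : B * B) : option (B * B) :=
  let: (b, b') := bb in
  if (eps i b' <= phi i b)%N then omap (fun x => (x, b')) (ce i b)
  else omap (fun y => (b, y)) (ce i b').

Definition is_energy (i0 : I) (H : B -> B -> int) : Prop :=
  forall (i : I) (b b' c c' : B), tens2_e i (b, b') = Some (c, c') ->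
    H c c' = H b b' +
      (if i == i0 then (if (eps i0 b' <= phi i0 b)%N then 1 else -1) else 0).

Definition inPj (j : nat) (b : B) (mu : Pw I) (p : seq B) : Prop :=
  exists r : seq B, [/\ p = b :: r, size r = j &
                        \sum_(x <- r) cwt x = cl mu].

(* E(b_{j+1} (x) ... (x) b_1) = sum_{k=1}^{j} k H(b_{k+1} (x) b_k) *)
Fixpoint Een (H : B -> B -> int) (p : seq B) : int :=
  match p with
  | x :: ((y :: _) as rest) => (size rest)%:Z * H x y + Een H rest
  | _ => 0
  end.

End Crys.

(* Main.v *)
Require Import Defs.
From HB Require Import structures.
From mathcomp Require Import all_boot all_order all_algebra.
From mathcomp Require Import zify ring.
Import Order.TTheory GRing.Theory Num.Theory.
Local Open Scope ring_scope.

Set Implicit Arguments. Unset Strict Implicit. Unset Printing Implicit Defensive.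

Section Gen.
Variables (T : Type) (g : T -> option T).

Lemma iterpS k x : iterp g k.+1 x = obind g (iterp g k x).
Proof. by []. Qed.

Lemma iterpSr k x : iterp g k.+1 x = obind (iterp g k) (g x).
Proof.
elim: k x => [|k IH] x /=; first by case: (g x).
rewrite /iterp /= in IH *. rewrite IH. by case: (g x).
Qed.

Lemma iterp_prefix k l x : (l <= k)%N -> isSome (iterp g k x) -> isSome (iterp g l x).
Proof.
elim: k => [|k IH]; first by rewrite leqn0 => /eqP ->.
rewrite leq_eqVlt => /orP [/eqP -> //|]; rewrite ltnS => hl.
rewrite iterpS => h; apply: IH => //; by case: (iterp g k x) h.
Qed.

Lemma maxit_ge N x k : (k <= N)%N -> isSome (iterp g k x) -> (k <= maxit N g x)%N.
Proof.
move=> hk hs; rewrite /maxit.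
exact: (@leq_bigmax_cond _ (fun k : 'I_N.+1 => isSome (iterp g k x)) (fun k => nat_of_ord k) (Ordinal (hk : (k < N.+1)%N))).
Qed.

Lemma maxit_le N x m : (forall k, (k <= N)%N -> isSome (iterp g k x) -> (k <= m)%N) ->
  (maxit N g x <= m)%N.
Proof.
move=> h; rewrite /maxit; apply/bigmax_leqP => k hk; apply: h => //.
by rewrite -ltnS.
Qed.

Lemma maxit_N N x : (maxit N g x <= N)%N.
Proof. by apply: maxit_le. Qed.

Lemma maxit_some N x : isSome (iterp g (maxit N g x) x).
Proof.
rewrite /maxit.
apply: (big_ind (fun v => isSome (iterp g v x))) => //.
move=> u v hu hv; rewrite /maxn; by case: ifP.
Qed.

Lemma maxit_pos_some N x : (0 < maxit N g x)%N -> isSome (g x).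
Proof.
move=> h; have := iterp_prefix h (maxit_some N x). by [].
Qed.

End Gen.

Section Crys1.
Variables (I : finType) (a : I -> I -> int) (B : finCrystal a) (i : I).
Hypothesis a_ii : a i i = 2.

Lemma wt_iter_e k (x z : B) : iterp (ce i) k x = Some z ->
  cwt z = cwt x + [ffun j => a j i] *+ k.
Proof.
elim: k z => [|k IH] z; first by move=> [<-]; rewrite mulr0n addr0.
rewrite iterpS; case h: (iterp (ce i) k x) => [w|] //= hw.
by rewrite (c_wte hw) (IH _ h) mulrSr addrA.
Qed.

Lemma wt_iter_f k (x z : B) : iterp (cf i) k x = Some z ->
  cwt z = cwt x - [ffun j => a j i] *+ k.
Proof.
elim: k z => [|k IH] z; first by move=> [<-]; rewrite mulr0n subr0.
rewrite iterpS; case h: (iterp (cf i) k x) => [w|] //= hw.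
by rewrite (c_wtf hw) (IH _ h) mulrSr opprD addrA.
Qed.

Lemma wti_iter_e k (x z : B) : iterp (ce i) k x = Some z ->
  cwt z i = cwt x i + 2 *+ k.
Proof. by move/wt_iter_e => ->; rewrite !ffunE ffunMnE ffunE a_ii. Qed.

Lemma wti_iter_f k (x z : B) : iterp (cf i) k x = Some z ->
  cwt z i = cwt x i - 2 *+ k.
Proof. by move/wt_iter_f => ->; rewrite !ffunE ffunMnE ffunE a_ii. Qed.

Lemma string_bound k (x z : B) : iterp (ce i) k x = Some z -> (k < #|B|)%N.
Proof.
move=> hz.
pose xs l := odflt x (iterp (ce i) l x).
have hw : forall l, (l <= k)%N -> cwt (xs l) i = cwt x i + 2 *+ l.
  move=> l hl; have hk : isSome (iterp (ce i) k x) by rewrite hz.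
  have := iterp_prefix hl hk.
  rewrite /xs; case e: (iterp (ce i) l x) => [w|] // _.
  exact: wti_iter_e e.
have hu : uniq (map xs (iota 0 k.+1)).
  rewrite map_inj_in_uniq ?iota_uniq // => l1 l2.
  rewrite !mem_iota !add0n !ltnS => h1 h2 e.
  have := hw _ h1; have := hw _ h2; rewrite e => -> /eqP.
  move/eqP/addrI; lia.
have := uniq_leq_size hu (fun y _ => mem_enum B y).
by rewrite size_map size_iota -cardT.
Qed.

Lemma phi_e (y y' : B) : ce i y = Some y' -> (phi i y <= phi i y')%N.
Proof.
move=> h; apply: maxit_ge; first exact: maxit_N.
apply: (@iterp_prefix _ _ (phi i y).+1); first exact: leqnSn.
by rewrite iterpSr (proj2 (c_ef _ _ _) h) /=; exact: maxit_some.
Qed.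

Lemma eps_e (y y' : B) : ce i y = Some y' -> (eps i y <= (eps i y').+1)%N.
Proof.
move=> h; case e: (eps i y) => [//|k]; rewrite ltnS.
have hs := maxit_some (ce i) #|B| y; rewrite -/(eps i y) e iterpSr h /= in hs.
apply: maxit_ge => //; have := maxit_N (ce i) #|B| y; rewrite -/(eps i y) e.
exact: ltnW.
Qed.

Lemma eps_pos (y : B) : (0 < eps i y)%N -> exists y', ce i y = Some y'.
Proof. by move=> h; have := maxit_pos_some h; case: (ce i y) => // y' _; exists y'. Qed.

Lemma eps_string k (y y' : B) : iterp (ce i) k y = Some y' -> (k <= eps i y)%N.
Proof.
move=> h; apply: maxit_ge; first by apply: ltnW; exact: string_bound h.
by rewrite h.
Qed.

Notation epsT m r := (maxit (#|B| ^ m) (@tensE _ _ B i m) r).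

Lemma tensE_cons m (b : B) r : @tensE _ _ B i m.+1 (b :: r) =
  if (epsT m r <= phi i b)%N then omap (fun b' => b' :: r) (ce i b)
  else omap (fun r' => b :: r') (@tensE _ _ B i m r).
Proof. by []. Qed.

Lemma tensE0 r : @tensE _ _ B i 0 r = None.
Proof. by []. Qed.

Lemma F1 m (y : B) r2 : (eps i y <= epsT m.+1 (y :: r2))%N.
Proof.
have inner : forall k, (k <= eps i y)%N -> exists y' r',
   iterp (@tensE _ _ B i m.+1) k (y :: r2) = Some (y' :: r') /\ (eps i y <= eps i y' + k)%N.
  elim=> [|k IH] hk; first by exists y, r2; rewrite addn0.
  have [y' [r' [h1 h2]]] := IH (ltnW hk).
  rewrite iterpS h1 /= tensE_cons.
  case: ifP => hc.
    have [y'' hy''] : exists y'', ce i y' = Some y'' by apply: eps_pos; lia.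
    exists y'', r'; rewrite hy''; split => //; have := eps_e hy''; lia.
  have : (0 < epsT m r')%N by rewrite ltnNge; apply/negP => hh; move: hc; rewrite (leq_trans hh (leq0n _)).
  move=> hh; have := maxit_pos_some hh; case e: (@tensE _ _ B i m r') => [r''|] // _.
  exists y', r''; split => //; lia.
have [y' [r' [h1 _]]] := inner _ (leqnn _).
apply: maxit_ge; last by rewrite h1.
apply: (leq_trans (maxit_N _ _ _)); rewrite expnS leq_pmulr // expn_gt0.
by apply/orP; left; apply/card_gt0P; exists y.
Qed.

Lemma F2 m (y : B) r2 : (epsT m r2 <= phi i y)%N -> (epsT m.+1 (y :: r2) <= eps i y)%N.
Proof.
move=> hc.
have inner : forall k z, iterp (@tensE _ _ B i m.+1) k (y :: r2) = Some z ->
  exists y', [/\ z = y' :: r2, iterp (ce i) k y = Some y' & (phi i y <= phi i y')%N].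
  elim=> [|k IH] z; first by move=> [<-]; exists y.
  rewrite iterpS; case e: (iterp _ k _) => [w|] //=.
  have [y' [-> hy' hp]] := IH _ e.
  rewrite tensE_cons (leq_trans hc hp).
  case e2: (ce i y') => [y''|] //= [<-]; exists y''; split => //.
    by rewrite hy'.
  exact: leq_trans hp (phi_e e2).
apply: maxit_le => k _; case e: (iterp _ k _) => [z|] // _.
have [y' [_ hy' _]] := inner _ _ e; exact: eps_string hy'.
Qed.

End Crys1.

Section Crys2.
Variables (I : finType) (a : I -> I -> int) (B : finCrystal a) (i i0 : I).
Hypothesis a_ii : a i i = 2.
Variable H : B -> B -> int.
Hypothesis HH : is_energy i0 H.
Let d : int := (i0 == i)%:Z.

Notation epsT m r := (maxit (#|B| ^ m) (@tensE _ _ B i m) r).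

Lemma H_left (b b' y : B) : ce i b = Some b' -> (eps i y <= phi i b)%N ->
  H b' y = H b y + d.
Proof.
move=> hb hc; have : tens2_e i (b, y) = Some (b', y) by rewrite /tens2_e hc hb.
move/HH => ->; rewrite /d; case: (eqVneq i0 i) => [->|ne].
  by rewrite hc.
  by [].
Qed.

Lemma H_right (b y y' : B) : ce i y = Some y' -> (phi i b < eps i y)%N ->
  H b y' = H b y - d.
Proof.
move=> hy hc; have : tens2_e i (b, y) = Some (b, y').
  by rewrite /tens2_e leqNgt hc hy.
move/HH => ->; rewrite /d; case: (eqVneq i0 i) => [->|ne].
  by rewrite leqNgt hc.
by rewrite subr0.
Qed.

Lemma Een_cons2 (x y : B) r : Een H (x :: y :: r) = (size r).+1%:Z * H x y + Een H (y :: r).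
Proof. by []. Qed.

Lemma step m : forall (b : B) r p', size r = m -> @tensE _ _ B i m.+1 (b :: r) = Some p' ->
  (exists b', [/\ ce i b = Some b', p' = b' :: r, (epsT m r <= phi i b)%N &
     Een H p' = Een H (b :: r) + m%:Z * d])
  \/ (exists r', [/\ p' = b :: r', size r' = m & Een H p' = Een H (b :: r) - d]).
Proof.
elim: m => [|m IH] b r p' hs; rewrite tensE_cons.
  case: r hs => // _; case: ifP => hc //.
  case hb: (ce i b) => [b'|] //= [<-]; left; exists b'; split => //.
case: ifP => hc.
  case hb: (ce i b) => [b'|] //= [<-]; left; exists b'; split => //.
  case: r hs hc => [//|y r2] [hs2] hc /=.
  rewrite (H_left (y:=y) hb); last first.
    apply: leq_trans hc; rewrite -hs2; exact: F1.
  by rewrite hs2 mulrDr addrAC.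
case: r hs hc => [//|y r2] [hs2] hc.
case e: (@tensE _ _ B i m.+1 (y :: r2)) => [r'|]; last by []. case=> <-; right; exists r'.
case: (IH y r2 r' hs2 e) => [[y' [hy -> hc2 hE]]|[r2' [-> hs2' hE]]].
  split => //; first by rewrite /= hs2. rewrite (Een_cons2 b y' r2) (Een_cons2 b y r2) hE.
  rewrite (H_right (b:=b) hy); last by move: hc => /negbT; rewrite -ltnNge => hc; apply: leq_trans hc (F2 a_ii hc2).
  rewrite hs2 -addn1 PoszD; ring.
split => //; first by rewrite /= hs2'. rewrite !Een_cons2 hE hs2' hs2 addrA //.
Qed.

Lemma iter_step (j : nat) : forall n (b0 : B) r p', size r = j ->
  iterp (@tensE _ _ B i j.+1) n (b0 :: r) = Some p' ->
  exists k y r', [/\ p' = y :: r', size r' = j, (k <= n)%N, iterp (ce i) k b0 = Some y &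
    Een H p' = Een H (b0 :: r) + (k%:Z * j%:Z - (n%:Z - k%:Z)) * d].
Proof.
elim=> [|n IH] b0 r p' hr.
  move=> [<-]; exists 0%N, b0, r; split => //; ring.
rewrite iterpS; case e: (iterp _ n _) => [q|] //= hq.
have [k [y [r' [hq' hr' hk hy hE]]]] := IH _ _ _ hr e.
subst q.
case: (step hr' hq) => [[y' [hy' -> _ hE']]|[r'' [-> hr'' hE']]].
  exists k.+1, y', r'; split => //.
  - by rewrite iterpS hy.
  - rewrite hE' hE -[k.+1]addn1 -[n.+1]addn1 !PoszD; ring.
exists k, y, r''; split => //; first exact: leqW.
rewrite hE' hE -[n.+1]addn1 !PoszD; ring.
Qed.

End Crys2.

Theorem mainTheorem5 (I : finType) (a : I -> I -> int) (i0 : I)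
  (Haff : affine_cartan a) (B : finCrystal a) (H : B -> B -> int)
  (HH : is_energy i0 H)
  (b : B) (i : I) (xi : Pw I) (j n s t : nat)
  (Hts : (t <= s)%N) (Hsm : (s <= phi i b)%N)
  (bs bt : B) (Hbs : iterp (cf i) s b = Some bs) (Hbt : iterp (cf i) t b = Some bt)
  (p p' : seq B)
  (Hp : inPj j bs xi p)
  (Hep : iterp (tensE i j.+1) n p = Some p')
  (Hp' : inPj j bt (xi + alpha a i0 i *~ (n%:Z + t%:Z - s%:Z)) p') :
  Een H p' = Een H p + ((j.+1)%:Z * (s%:Z - t%:Z) - n%:Z) * (i0 == i)%:Z.
Proof.
move: Haff => [[aii _] _ _]; have a_ii := aii i.
case: Hp => r [hp hr _]; subst p.
have [k [y [r' [hp' hr' hk hy hE]]]] := iter_step a_ii HH hr Hep.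
case: Hp' => r'' [hp'' _ _]; rewrite hp' in hp''; case: hp'' => hyb _; subst y.
have w1 := wti_iter_e a_ii hy.
have w2 := wti_iter_f a_ii Hbs.
have w3 := wti_iter_f a_ii Hbt.
have hk' : k%:Z = s%:Z - t%:Z by lia.
rewrite hE hk' -[j.+1]addn1 PoszD; ring.
Qed.
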